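(* Let $p\ne q$ be primes, $G=\mathbb{Z}_p^2\times\mathbb{Z}_q^2$, and $A\subseteq G$ with $|A|\ge pq$. Then either $A$ is a tile of $G$ and $|A|=pq$, or for all nonzero $a\in\mathbb{Z}_p^2$ and nonzero $b\in\mathbb{Z}_q^2$ at least one of the directions $[a,0]$, $[0,b]$, $[a,b]$ belongs to $\mathcal{D}(A)$.
   Context: Elements of $G$ are written $(a,b)$ with $a\in\mathbb{Z}_p^2$, $b\in\mathbb{Z}_q^2$. For $v,w\in G$, $v\sim w$ if they generate the same cyclic subgroup; the class of $(a,b)$ is the direction $[a,b]$. $\mathcal{D}(A)$ is the set of directions $[v]$ for which some $w\in A-A$ satisfies $w\sim v$. $A$ is a tile of $G$ if there is $T\subseteq G$ with $A+T=G$ and $|A||T|=|G|$. *)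

(* Defs.v *)
From HB Require Import structures.
From mathcomp Require Import all_boot all_order all_algebra.
Set Implicit Arguments. Unset Strict Implicit. Unset Printing Implicit Defensive.
Import GRing.Theory.
Local Open Scope ring_scope.

Definition Gpq (p q : nat) := ('rV['Z_p]_2 * 'rV['Z_q]_2)%type.
HB.instance Definition _ p q := GRing.Zmodule.on (Gpq p q).
HB.instance Definition _ p q := Finite.on (Gpq p q).

Section Generic.
Variable V : finZmodType.

Definition cyc (v : V) : {set V} := [set v *+ n | n : 'I_#|V|.+1].

Definition same_dir (v w : V) : bool := cyc v == cyc w.

Definition diffset (A : {set V}) : {set V} := [set x - y | x in A, y in A].

Definition in_dirset (A : {set V}) (v : V) : Prop :=
  exists2 w, w \in diffset A & same_dir w v.

Definition sumset (A T : {set V}) : {set V} := [set x + y | x in A, y in T].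

Definition is_tile (A : {set V}) : Prop :=
  exists T : {set V}, sumset A T = [set: V] /\ (#|A| * #|T| = #|V|)%N.
End Generic.

(* Main.v *)
Require Import Defs.
From mathcomp Require Import all_boot all_order all_algebra.
From Stdlib Require Import Classical.
From mathcomp Require Import zify.
Local Open Scope ring_scope.
Import GRing.Theory.

Lemma rmod r (hr : (1 < r)%N) (a : 'rV['Z_r]_2) k k' :
  k = k' %[mod r] -> a *+ k = a *+ k'.
Proof.
move=> e; rewrite -!scaler_nat; congr (_ *: _); apply: val_inj.
by rewrite /= !val_Zp_nat // e.
Qed.

Lemma rzero r (hr : (1 < r)%N) (a : 'rV['Z_r]_2) k :
  (r %| k)%N -> a *+ k = 0.
Proof.
move=> d; rewrite (@rmod r hr a k 0) ?mulr0n //.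
by rewrite mod0n; apply/eqP.
Qed.

Arguments rmod {r} hr a {k k'}.
Arguments rzero {r} hr a {k}.

Lemma unit_dvd r (pr : prime r) (a : 'rV['Z_r]_2) k :
  a != 0 -> a *+ k = 0 -> (r %| k)%N.
Proof.
move=> a0 ak; apply/negPn/negP => nd.
have hr := prime_gt1 pr.
have u : (k%:R : 'Z_r) \is a GRing.unit by rewrite unitZpE // prime_coprime.
move/eqP: a0; apply.
rewrite -[a]scale1r -(mulVr u) -scalerA scaler_nat ak.
by rewrite scaler0.
Qed.

Lemma inv_mod N k : (1 < N)%N -> coprime N k -> exists m, (k * m = 1 %[mod N])%N.
Proof.
move=> hN c.
have u : (k%:R : 'Z_N) \is a GRing.unit by rewrite unitZpE.
exists (val ((k%:R : 'Z_N)^-1)).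
have e : ((k * val ((k%:R : 'Z_N)^-1))%:R : 'Z_N) = 1.
  rewrite natrM.
  have -> : ((val ((k%:R : 'Z_N)^-1))%:R : 'Z_N) = (k%:R : 'Z_N)^-1.
    by apply: val_inj; rewrite /= val_Zp_nat // modn_small //; case: (_^-1) => /= i; rewrite Zp_cast.
  by rewrite mulrV.
have := congr1 val e; rewrite /= val_Zp_nat // => ->.
by rewrite Zp_cast.

Qed.

Section S.
Variables (p q : nat) (pp : prime p) (pq : prime q) (hpq : p != q).
Local Notation G := (Gpq p q).

Let p1 : (1 < p)%N := prime_gt1 pp.
Let q1 : (1 < q)%N := prime_gt1 pq.

Lemma cop : coprime p q.
Proof. by rewrite prime_coprime // dvdn_prime2. Qed.

Lemma mulrn_pair (v : G) n : v *+ n = (v.1 *+ n, v.2 *+ n).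
Proof.
elim: n => [|n IH]; first by rewrite !mulr0n.
by rewrite !mulrS IH.
Qed.

Lemma killpq (v : G) : v *+ (p * q) = 0.
Proof.
rewrite mulrn_pair (rzero p1) ?dvdn_mulr // (rzero q1) ?dvdn_mull //.
Qed.

Lemma cardG : #|{: G}| = (p * q * (p * q))%N.
Proof.
rewrite /Gpq card_prod !card_mx !card_ord !Zp_cast //.
lia.
Qed.

Lemma cycE (v : G) x : x \in cyc v <-> exists n, x = v *+ n.
Proof.
split; first by case/imsetP => i _ ->; exists i.
move=> [n ->]; apply/imsetP.
have lt : (n %% (p * q) < #|{: G}|.+1)%N.
  apply: (@leq_trans (p * q)); first by rewrite ltn_mod muln_gt0 !prime_gt0.
  rewrite cardG; apply: leqW; apply: leq_pmulr; by rewrite muln_gt0 !prime_gt0.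
exists (Ordinal lt) => //=.
rewrite {1}(divn_eq n (p * q)) mulrnDr mulrnA killpq add0r.
by [].
Qed.

Lemma same_dir_of (w v : G) :
  (exists n, w = v *+ n) -> (exists m, v = w *+ m) -> same_dir w v.
Proof.
move=> [n en] [m em]; rewrite /same_dir; apply/eqP/setP => x.
apply/idP/idP => /cycE [k ->]; apply/cycE.
  by exists (n * k)%N; rewrite en mulrnA.
by exists (m * k)%N; rewrite em mulrnA.
Qed.

Lemma ord_v (a : 'rV['Z_p]_2) (b : 'rV['Z_q]_2) d :
  a != 0 -> b != 0 -> ((a, b) : G) *+ d = 0 -> (p * q %| d)%N.
Proof.
move=> a0 b0; rewrite mulrn_pair => -[e1 e2].
by rewrite Gauss_dvd ?cop // (@unit_dvd _ pp _ _ a0 e1) (@unit_dvd _ pq _ _ b0 e2).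
Qed.

Lemma dir_case (A : {set G}) (a : 'rV['Z_p]_2) (b : 'rV['Z_q]_2) (w : G) n :
  w \in diffset A -> w != 0 -> w = ((a, b) : G) *+ n ->
  in_dirset A ((a, 0 : 'rV['Z_q]_2) : G) \/ in_dirset A ((0 : 'rV['Z_p]_2, b) : G) \/
     in_dirset A ((a, b) : G).
Proof.
move=> wA w0 ew.
have ew' := ew; rewrite mulrn_pair /= in ew'.
have [dp|ndp] := boolP (p %| n)%N; have [dq|ndq] := boolP (q %| n)%N.
- by move: w0; rewrite ew' (rzero p1 _ dp) (rzero q1 _ dq) eqxx.
- right; left; exists w => //.
  have cq : coprime q n by rewrite prime_coprime.
  have [m em] := @inv_mod _ _ q1 cq.
  apply: same_dir_of.
    by exists n; rewrite ew' mulrn_pair /= mul0rn (rzero p1 _ dp).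
  exists m; rewrite ew' mulrn_pair /= (rzero p1 _ dp) mul0rn -mulrnA (rmod q1 _ em) mulr1n.
  by [].
- left; exists w => //.
  have cp : coprime p n by rewrite prime_coprime.
  have [m em] := @inv_mod _ _ p1 cp.
  apply: same_dir_of.
    by exists n; rewrite ew' mulrn_pair /= mul0rn (rzero q1 _ dq).
  exists m; rewrite ew' mulrn_pair /= (rzero q1 _ dq) mul0rn -mulrnA (rmod p1 _ em) mulr1n.
  by [].
- right; right; exists w => //.
  have pq1 : (1 < p * q)%N by rewrite (@leq_trans p) // leq_pmulr // prime_gt0.
  have cpq : coprime (p * q) n by rewrite coprimeMl !prime_coprime ?ndp ?ndq.
  have [m em] := @inv_mod _ _ pq1 cpq.
  apply: same_dir_of; first by exists n.
  exists m; rewrite ew' mulrn_pair /= -!mulrnA.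
  rewrite (rmod p1 _ (k' := 1)); last by rewrite -(@modn_dvdm (p * q) _ p) ?dvdn_mulr // em modn_dvdm ?dvdn_mulr.
  rewrite (rmod q1 _ (k' := 1)); last by rewrite -(@modn_dvdm (p * q) _ q) ?dvdn_mull // em modn_dvdm ?dvdn_mull.
  by rewrite !mulr1n.
Qed.

Lemma main (A : {set G}) (a : 'rV['Z_p]_2) (b : 'rV['Z_q]_2) :
  (p * q <= #|A|)%N -> a != 0 -> b != 0 ->
  ~ in_dirset A ((a, 0 : 'rV['Z_q]_2) : G) -> ~ in_dirset A ((0 : 'rV['Z_p]_2, b) : G) ->
  ~ in_dirset A ((a, b) : G) ->
  is_tile A /\ #|A| = (p * q)%N.
Proof.
move=> hA a0 b0 N1 N2 N3.
set v : G := (a, b); set K := cyc v.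
have key : forall x y, x \in A -> y \in A -> x - y \in K -> x = y.
  move=> x y xA yA /cycE [n en].
  case: (eqVneq (x - y) 0) => [/eqP|ne]; first by rewrite subr_eq0 => /eqP.
  have wA : x - y \in diffset A by apply/imset2P; exists x y.
  case: (@dir_case A a b (x - y) n wA ne en) => [h|[h|h]]; [case: (N1 h)|case: (N2 h)|case: (N3 h)].
have subK : forall k k', k \in K -> k' \in K -> k' - k \in K.
  move=> k k' /cycE [n ->] /cycE [n' ->]; apply/cycE.
  exists (n' + n * (p * q).-1)%N; rewrite mulrnDr; congr (_ + _).
  apply/eqP; rewrite eq_sym -subr_eq0 opprK -mulrnDr -mulnSr prednK; last by rewrite muln_gt0 !prime_gt0.
  by rewrite mulrnA killpq.
have cK : (p * q <= #|K|)%N.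
  have inj : injective (fun i : 'I_(p * q) => v *+ i).
    suff H : forall i j : 'I_(p * q), (i <= j)%N -> v *+ i = v *+ j -> i = j.
      move=> i j e; case: (leqP i j) => h; [exact: H h e | exact: esym (H _ _ (ltnW h) (esym e))].
    move=> i j ij e; apply: val_inj.
    have d : (p * q %| j - i)%N.
      apply: (@ord_v a b _ a0 b0); apply: (@addrI _ (v *+ i)); rewrite -mulrnDr subnKC // addr0; exact: esym e.
    have lt : (j - i < p * q)%N by rewrite (leq_ltn_trans (leq_subr _ _)).
    case: (posnP (j - i)) => [z|pos]; first by apply/eqP; rewrite eqn_leq ij -subn_eq0 z.
    by have := dvdn_leq pos d; rewrite leqNgt lt.
  rewrite -[X in (X <= _)%N]card_ord -(card_imset _ inj).
  apply: subset_leq_card; apply/subsetP => x /imsetP [i _ ->]; apply/cycE; by exists i.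
have inj2 : {in setX A K &, injective (uncurry (fun x y : G => x + y))}.
  move=> [x k] [x' k'] /setXP [xA kK] /setXP [xA' kK'] /= e.
  have e1 : x = x'.
    apply: key => //; have -> : x - x' = k' - k.
      have h1 : forall u s t : G, (u + s) - (t + s) = u - t.
        by move=> u s t; rewrite opprD addrACA subrr addr0.
      by rewrite -(h1 x k x') e [x' + k']addrC [x' + k]addrC h1.
    exact: subK.
  by move: e; rewrite e1 => /addrI ->.
have cS : #|sumset A K| = (#|A| * #|K|)%N.
  by rewrite /sumset curry_imset2X (card_in_imset inj2) cardsX.
have le : (#|A| * #|K| <= #|{: G}|)%N by rewrite -cS -cardsT subset_leq_card ?subsetT.
have eq : (#|A| * #|K| = #|{: G}|)%N.
  by apply/eqP; rewrite eqn_leq le cardG leq_mul.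
split; last first.
  move: le; rewrite cardG => le; apply/eqP; rewrite eqn_leq hA andbT.
  rewrite -(@leq_pmul2r (p * q)); last by rewrite muln_gt0 !prime_gt0.
  by apply: leq_trans le; rewrite leq_mul2l cK orbT.
exists K; split => //.
by apply/eqP; rewrite eqEcard subsetT cardsT cS; exact: (eq_leq (esym eq)).
Qed.

End S.

Theorem lemma4p1 (p q : nat) (pp : prime p) (pq : prime q) (hpq : p != q)
  (A : {set Gpq p q}) (hA : (p * q <= #|A|)%N) :
  (is_tile A /\ #|A| = (p * q)%N) \/
  (forall (a : 'rV['Z_p]_2) (b : 'rV['Z_q]_2), a != 0 -> b != 0 ->
     in_dirset A ((a, 0 : 'rV['Z_q]_2) : Gpq p q) \/ in_dirset A ((0 : 'rV['Z_p]_2, b) : Gpq p q) \/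
     in_dirset A ((a, b) : Gpq p q)).
Proof.
case: (classic (forall (a : 'rV['Z_p]_2) (b : 'rV['Z_q]_2), a != 0 -> b != 0 ->
     in_dirset A ((a, 0 : 'rV['Z_q]_2) : Gpq p q) \/ in_dirset A ((0 : 'rV['Z_p]_2, b) : Gpq p q) \/
     in_dirset A ((a, b) : Gpq p q))) => [H|H]; first by right.
left.
have [a Ha] := not_all_ex_not _ _ H.
have [b Hb] := not_all_ex_not _ _ Ha.
have [a0 Hb'] := imply_to_and _ _ Hb.
have [b0 Hn] := imply_to_and _ _ Hb'.
exact: (@main _ _ pp pq hpq A a b hA a0 b0 (fun h => Hn (or_introl h))
  (fun h => Hn (or_intror (or_introl h))) (fun h => Hn (or_intror (or_intror h)))).
Qed.
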